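(* Let $G$ be an $a\times a$ pseudogrid with $a\ge 5$ (with grid-partition $\mathcal{P}$), and let $s,v,w,t$ be vertices of $G$ with $s$ in column $1$ of $G$, $v,w\in\mathrm{int}_1(G)$, and $t$ in column $a$ of $G$. Then $G$ contains a path $P$ with endpoints $s$ and $t$ that contains $v$ and $w$.
   Context: For a positive integer $a$, the grid $G_{a\times a}$ has vertex set $\{1,\dots,a\}^2$, with $(i_1,j_1)$ and $(i_2,j_2)$ adjacent iff $|i_1-i_2|+|j_1-j_2|=1$. For a graph $H$, $\mathrm{VE}(H):=V(H)\cup E(H)$. An $a\times a$ pseudogrid is any graph obtained from $G_{a\times a}$ as follows: each edge $vw$ is replaced by a path $\overline{P}_{vw}$ with endpoints $v,w$ (subdividing $vw$ zero or more times); each vertex $v=(i,j)$ of degree $4$ is replaced by a nonempty path $P_v$: if $P_v$ has one vertex it plays the role of $v$; otherwise its endpoints $p,q$ are attached, $p$ to the paths $\overline{P}_{vw}$ towards two of the grid neighbours of $v$ and $q$ to the other two, in one of the patterns (Q1) $p$: $(i-1,j),(i,j-1)$, $q$: $(i+1,j),(i,j+1)$; (Q2) $p$: $(i,j+1),(i-1,j)$, $q$: $(i,j-1),(i+1,j)$; (Q3) $p$: $(i-1,j),(i+1,j)$, $q$: $(i,j-1),(i,j+1)$. For each grid edge $vw$, $P_{vw}$ is the (possibly empty) path of internal vertices of $\overline{P}_{vw}$; for each grid vertex $v$ of degree less than $4$, $P_v$ is the one-vertex path on $v$; $\mathcal{P}=\{V(P_\mu):\mu\in\mathrm{VE}(G_{a\times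 a})\}$ is the grid-partition. Column $1$ of $G$ is the path $\bigcup_{j=1}^{a-1}\overline{P}_{(1,j)(1,j+1)}$, and column $a$ of $G$ is the path $\bigcup_{j=1}^{a-1}\overline{P}_{(a,j)(a,j+1)}$. $\mathrm{int}_r(G_{a\times a})$ is the subgraph of $G_{a\times a}$ induced on $\{1+r,\dots,a-r\}^2$, and $\mathrm{int}_r(G):=\bigcup_{\mu\in\mathrm{VE}(\mathrm{int}_r(G_{a\times a}))}V(P_\mu)$. *)

(* Defs.v *)
From mathcomp Require Import all_boot.
Set Implicit Arguments. Unset Strict Implicit. Unset Printing Implicit Defensive.

(* Grid coordinates are 1-indexed: grid vertex (i,j), 1 <= i,j <= a;
   column c of G_{a x a} is {(c,j) : 1 <= j <= a}.
   Directions of the grid neighbours of (i,j):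
   dW = (i-1,j), dE = (i+1,j), dS = (i,j-1), dN = (i,j+1). *)
Inductive dir := dW | dE | dS | dN.

(* The three attachment patterns for the path P_v replacing a degree-4 vertex. *)
Inductive pattern := Q1 | Q2 | Q3.

(* Nodes of the pseudogrid, encoded as (tag, i, j, k):
   tag 0 : k-th vertex (k = 0 is the endpoint p, the last one is q) of P_(i,j)
   tag 1 : k-th internal vertex (from (i,j) towards (i+1,j)) of the path
           replacing the grid edge (i,j)(i+1,j)
   tag 2 : k-th internal vertex (from (i,j) towards (i,j+1)) of the path
           replacing the grid edge (i,j)(i,j+1). *)
Definition node := (nat * nat * nat * nat)%type.

(* Parameters of the construction:
   plen i j  : P_(i,j) has (plen i j).+1 vertices when (i,j) has degree 4
               (any nonempty path), and 1 vertex otherwise;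
   hsub i j  : number of subdivision vertices on edge (i,j)(i+1,j);
   vsub i j  : number of subdivision vertices on edge (i,j)(i,j+1);
   pat i j   : attachment pattern used at (i,j) (relevant when P_(i,j) has
               at least 2 vertices). *)
Record pgparams := PGParams {
  plen : nat -> nat -> nat;
  hsub : nat -> nat -> nat;
  vsub : nat -> nat -> nat;
  pat  : nat -> nat -> pattern }.

Section Pseudogrid.
Variables (a : nat) (P : pgparams).

Definition deg4 (i j : nat) : bool := (2 <= i <= a - 1) && (2 <= j <= a - 1).

Definition vlen (i j : nat) : nat := if deg4 i j then (plen P i j).+1 else 1.

(* whether the neighbour in direction d is attached to the endpoint p *)
Definition onp (q : pattern) (d : dir) : bool :=
  match q, d with
  | Q1, dW | Q1, dS => true
  | Q2, dN | Q2, dW => true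
  | Q3, dW | Q3, dE => true
  | _, _ => false
  end.

Definition attach (i j : nat) (d : dir) : node :=
  (0, i, j, if onp (pat P i j) d then 0 else (vlen i j).-1).

Definition is_vertex (x : node) : Prop :=
  match x with
  | (0, i, j, k) => [/\ 1 <= i <= a, 1 <= j <= a & k < vlen i j]
  | (1, i, j, k) => [/\ 1 <= i < a, 1 <= j <= a & k < hsub P i j]
  | (2, i, j, k) => [/\ 1 <= i <= a, 1 <= j < a & k < vsub P i j]
  | _ => False
  end.

Definition vseq (i j : nat) : seq node := [seq (0, i, j, k) | k <- iota 0 (vlen i j)].
Definition hseq (i j : nat) : seq node :=
  attach i j dE :: [seq (1, i, j, k) | k <- iota 0 (hsub P i j)] ++ [:: attach i.+1 j dW].
Definition vertseq (i j : nat) : seq node :=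
  attach i j dN :: [seq (2, i, j, k) | k <- iota 0 (vsub P i j)] ++ [:: attach i j.+1 dS].

Definition piece (s : seq node) : Prop :=
  exists i j,
    [/\ 1 <= i <= a, 1 <= j <= a & s = vseq i j] \/
    [/\ 1 <= i < a, 1 <= j <= a & s = hseq i j] \/
    [/\ 1 <= i <= a, 1 <= j < a & s = vertseq i j].

Definition consecutive (x y : node) (s : seq node) : Prop :=
  exists s1 s2, s = s1 ++ [:: x, y & s2].

Definition adj (x y : node) : Prop :=
  exists s, piece s /\ (consecutive x y s \/ consecutive y x s).

Definition gpath_between (p : seq node) (x y : node) : Prop :=
  [/\ uniq p,
      (forall z, z \in p -> is_vertex z),
      (forall k, k.+1 < size p -> adj (nth x p k) (nth x p k.+1)),
      head y p = x & last x p = y] /\ p <> [::].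

(* x lies in column c of G, i.e. on the union of the paths
   \bar P_{(c,j)(c,j+1)}, 1 <= j < a *)
Definition in_column (c : nat) (x : node) : Prop :=
  is_vertex x /\
  match x with
  | (0, i, _, _) | (2, i, _, _) => i = c
  | _ => False
  end.

Definition in_int (r : nat) (x : node) : Prop :=
  is_vertex x /\
  match x with
  | (0, i, j, _) => 1 + r <= i <= a - r /\ 1 + r <= j <= a - r
  | (1, i, j, _) => 1 + r <= i /\ i.+1 <= a - r /\ 1 + r <= j <= a - r
  | (2, i, j, _) => 1 + r <= i <= a - r /\ 1 + r <= j /\ j.+1 <= a - r
  | _ => False
  end.

End Pseudogrid.

(* Main.v *)
Require Import Defs.
From mathcomp Require Import all_boot zify.
Set Implicit Arguments. Unset Strict Implicit. Unset Printing Implicit Defensive.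

Section Proof.
Variables (a : nat) (P : pgparams).

Fixpoint chain (s : seq node) : Prop :=
  match s with
  | x :: ((y :: _) as s') => adj a P x y /\ chain s'
  | _ => True
  end.

Lemma adj_sym x y : adj a P x y -> adj a P y x.
Proof. by case=> s [ps [h|h]]; exists s; split=> //; [right|left]. Qed.

Lemma chain_catJ s1 x s2 :
  chain (s1 ++ [:: x]) -> chain (x :: s2) -> chain (s1 ++ x :: s2).
Proof.
elim: s1 => [|y s1 IH] //=.
case: s1 IH => [|z s1] IH /=.
  by case=> h _ c; split.
by case=> h c1 c2; split=> //; apply: IH.
Qed.

Lemma chain_catl s1 s2 : chain (s1 ++ s2) -> chain s1.
Proof.
elim: s1 => [|y s1 IH] //=.
case: s1 IH => [|z s1] IH //= [h c]; split=> //; exact: IH.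
Qed.

Lemma chain_catr s1 s2 : chain (s1 ++ s2) -> chain s2.
Proof.
elim: s1 => [|y s1 IH] //= c; apply: IH.
by move: c; case: (s1 ++ s2) => // z s [].
Qed.

Lemma chain_consec s :
  (forall s1 s2 x y, s = s1 ++ [:: x, y & s2] -> adj a P x y) -> chain s.
Proof.
elim: s => [|x s IH] //=.
case: s IH => [|y s] IH // H; split.
  by apply: (H [::] s).
apply: IH => s1 s2 u w E; apply: (H (x :: s1) s2).
by rewrite E.
Qed.

Lemma piece_chain s : piece a P s -> chain s.
Proof.
move=> ps; apply: chain_consec => s1 s2 x y E.
by exists s; split=> //; left; exists s1, s2.
Qed.

Lemma piece_rev_chain s : piece a P s -> chain (rev s).
Proof.
move=> ps; apply: chain_consec => s1 s2 x y E.
exists s; split=> //; right; exists (rev s2), (rev s1).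
by rewrite -[s]revK E rev_cat /= rev_cons -cats1 -!catA rev_cons -cats1 -catA.
Qed.

Lemma chain_nth p x0 : chain p ->
  forall k, k.+1 < size p -> adj a P (nth x0 p k) (nth x0 p k.+1).
Proof.
elim: p => [|x p IH] //=.
case: p IH => [|y p] IH //= [h c] [|k] //= lt.
exact: IH.
Qed.


Notation gv := (nat * nat)%type.

Definition through (x : gv) (d1 d2 : dir) : seq node :=
  if onp (pat P x.1 x.2) d1 == onp (pat P x.1 x.2) d2 then [:: attach a P x.1 x.2 d1]
  else if onp (pat P x.1 x.2) d1 then vseq a P x.1 x.2 else rev (vseq a P x.1 x.2).

Definition dir_to (x y : gv) : dir :=
  if y == (x.1.+1, x.2) then dE else if x == (y.1.+1, y.2) then dW
  else if y == (x.1, x.2.+1) then dN else dS.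

Definition hmid i j : seq node := [seq (1, i, j, k) | k <- iota 0 (hsub P i j)].
Definition vmid i j : seq node := [seq (2, i, j, k) | k <- iota 0 (vsub P i j)].

Definition mid (x y : gv) : seq node :=
  if y == (x.1.+1, x.2) then hmid x.1 x.2 else if x == (y.1.+1, y.2) then rev (hmid y.1 y.2)
  else if y == (x.1, x.2.+1) then vmid x.1 x.2 else rev (vmid y.1 y.2).

Definition gadj (x y : gv) : bool :=
  [|| y == (x.1.+1, x.2), x == (y.1.+1, y.2), y == (x.1, x.2.+1) | x == (y.1, y.2.+1)].

Fixpoint liftaux (din : dir) (x : gv) (W : seq gv) : seq node :=
  match W with
  | [::] => through x din dE
  | y :: W' => through x din (dir_to x y) ++ mid x y ++ liftaux (dir_to y x) y W'
  end.

Definition inb (x : gv) := (1 <= x.1 <= a) && (1 <= x.2 <= a).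

Definition ntag (z : node) := z.1.1.1.
Definition ni (z : node) := z.1.1.2.
Definition nj (z : node) := z.1.2.

Definition owned (W : seq gv) (z : node) : bool :=
  if ntag z == 0 then (ni z, nj z) \in W
  else if ntag z == 1 then ((ni z, nj z) \in W) && (((ni z).+1, nj z) \in W)
  else ((ni z, nj z) \in W) && ((ni z, (nj z).+1) \in W).

Lemma vlen_gt0 i j : 0 < vlen a P i j.
Proof. by rewrite /vlen; case: ifP. Qed.

Lemma vseq_ends i j : exists r1 r2,
  vseq a P i j = (0, i, j, 0) :: r1 /\ vseq a P i j = rcons r2 (0, i, j, (vlen a P i j).-1).
Proof.
rewrite /vseq; have := vlen_gt0 i j; case: (vlen a P i j) => // n _.
exists [seq (0, i, j, k) | k <- iota 1 n]; exists [seq (0, i, j, k) | k <- iota 0 n].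
split=> //. by rewrite -map_rcons -cats1 -addn1 iotaD add0n addn1.
Qed.

Lemma through_ends x d1 d2 : exists r1 r2,
  through x d1 d2 = attach a P x.1 x.2 d1 :: r1 /\ through x d1 d2 = rcons r2 (attach a P x.1 x.2 d2).
Proof.
rewrite /through /attach.
have [r1 [r2 [E1 E2]]] := vseq_ends x.1 x.2.
case: (onp _ d1) (onp _ d2) => [] [] /=.
- by exists [::], [::].
- by exists r1, r2; rewrite -E1 -E2.
- exists (rev r2), (rev r1); split.
    by rewrite E2 rev_rcons.
  by rewrite E1 rev_cons.
- by exists [::], [::].
Qed.

Lemma through_mem x d1 d2 z : z \in through x d1 d2 ->
  exists2 k, z = (0, x.1, x.2, k) & k < vlen a P x.1 x.2.
Proof.
rewrite /through /attach /vseq.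
have H : z \in [seq (0, x.1, x.2, k) | k <- iota 0 (vlen a P x.1 x.2)] ->
  exists2 k, z = (0, x.1, x.2, k) & k < vlen a P x.1 x.2.
  by case/mapP=> k; rewrite mem_iota add0n => /andP[_ lt] ->; exists k.
case: ifP => _; last by case: ifP => _ //; rewrite mem_rev.
rewrite inE => /eqP ->; eexists; first reflexivity.
by case: (onp _ _); rewrite ?ltn_predL vlen_gt0.
Qed.

Lemma vseq_uniq i j : uniq (vseq a P i j).
Proof. by rewrite /vseq map_inj_uniq ?iota_uniq // => k1 k2 [->]. Qed.

Lemma through_uniq x d1 d2 : uniq (through x d1 d2).
Proof.
rewrite /through; case: ifP => _ //; case: ifP => _; by rewrite ?rev_uniq vseq_uniq.
Qed.

Lemma vseq_piece i j : 1 <= i <= a -> 1 <= j <= a -> piece a P (vseq a P i j).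
Proof. by move=> hi hj; exists i, j; left. Qed.

Lemma through_chain x d1 d2 : inb x -> chain (through x d1 d2).
Proof.
case/andP=> hi hj; rewrite /through; case: ifP => _ //; case: ifP => _.
  exact: piece_chain (vseq_piece hi hj).
exact: piece_rev_chain (vseq_piece hi hj).
Qed.


Lemma gadjP x y : gadj x y ->
  [\/ y = (x.1.+1, x.2), x = (y.1.+1, y.2), y = (x.1, x.2.+1) | x = (y.1, y.2.+1)].
Proof.
by case/or4P => /eqP E; [apply: Or41 | apply: Or42 | apply: Or43 | apply: Or44].
Qed.

Lemma pneq (i j k l : nat) : i != k -> ((i, j) == (k, l)) = false.
Proof. by move=> h; rewrite xpair_eqE (negbTE h). Qed.
Lemma pneq2 (i j k l : nat) : j != l -> ((i, j) == (k, l)) = false.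
Proof. by move=> h; rewrite xpair_eqE (negbTE h) andbF. Qed.

Lemma pneqS (i j l : nat) : ((i, j) == (i.+1, l)) = false.
Proof. by apply: pneq; lia. Qed.
Lemma pneqS2 (i j l : nat) : ((i, j) == (i.+2, l)) = false.
Proof. by apply: pneq; lia. Qed.
Lemma pneqT (i j : nat) : ((i, j) == (i, j.+2)) = false.
Proof. by apply: pneq2; lia. Qed.

Lemma dirE_E i j : dir_to (i, j) (i.+1, j) = dE.
Proof. by rewrite /dir_to /= eqxx. Qed.
Lemma dirE_W i j : dir_to (i.+1, j) (i, j) = dW.
Proof. by rewrite /dir_to /= pneqS2 eqxx. Qed.
Lemma midE_E i j : mid (i, j) (i.+1, j) = hmid i j.
Proof. by rewrite /mid /= eqxx. Qed.
Lemma midE_W i j : mid (i.+1, j) (i, j) = rev (hmid i j).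
Proof. by rewrite /mid /= pneqS2 eqxx. Qed.
Lemma dirN_N i j : dir_to (i, j) (i, j.+1) = dN.
Proof. by rewrite /dir_to /= !pneqS eqxx. Qed.
Lemma dirN_S i j : dir_to (i, j.+1) (i, j) = dS.
Proof. by rewrite /dir_to /= !pneqS pneqT. Qed.
Lemma midN_N i j : mid (i, j) (i, j.+1) = vmid i j.
Proof. by rewrite /mid /= !pneqS eqxx. Qed.
Lemma midN_S i j : mid (i, j.+1) (i, j) = rev (vmid i j).
Proof. by rewrite /mid /= !pneqS pneqT. Qed.


Lemma edge_chain x y : gadj x y -> inb x -> inb y ->
  chain (attach a P x.1 x.2 (dir_to x y) :: mid x y ++ [:: attach a P y.1 y.2 (dir_to y x)]).
Proof.
case: x => i j; case: y => i' j'.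
case/gadjP => [[-> ->]|[-> ->]|[-> ->]|[-> ->]] /andP[/andP[h1 h2] /andP[h3 h4]]
   /andP[/andP[h5 h6] /andP[h7 h8]].
- rewrite dirE_E dirE_W midE_E; apply: piece_chain.
  by exists i, j; right; left; split=> //; apply/andP.
- rewrite dirE_E dirE_W midE_W.
  have -> : [:: attach a P i'.+1 j' dW & rev (hmid i' j') ++ [:: attach a P i' j' dE]]
    = rev (hseq a P i' j') by rewrite /hseq rev_cons rev_cat /= -cats1.
  apply: piece_rev_chain.
  by exists i', j'; right; left; split=> //; apply/andP.
- rewrite dirN_N dirN_S midN_N; apply: piece_chain.
  by exists i, j; right; right; split=> //; apply/andP.
- rewrite dirN_N dirN_S midN_S.
  have -> : [:: attach a P i' j'.+1 dS & rev (vmid i' j') ++ [:: attach a P i' j' dN]]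
    = rev (vertseq a P i' j') by rewrite /vertseq rev_cons rev_cat /= -cats1.
  apply: piece_rev_chain.
  by exists i', j'; right; right; split=> //; apply/andP.
Qed.

Lemma mid_owned x y z : gadj x y -> z \in mid x y ->
  ntag z != 0 /\ forall W, owned W z = (x \in W) && (y \in W).
Proof.
case: x => i j; case: y => i' j'.
case/gadjP => /= [[-> ->]|[-> ->]|[-> ->]|[-> ->]];
  rewrite ?midE_E ?midE_W ?midN_N ?midN_S ?mem_rev /hmid /vmid;
  case/mapP=> k _ -> ; split=> // W; rewrite /owned /= // andbC //.
Qed.

Lemma mid_uniq x y : uniq (mid x y).
Proof.
have h1 i j : uniq (hmid i j) by rewrite map_inj_uniq ?iota_uniq // => k1 k2 [].
have h2 i j : uniq (vmid i j) by rewrite map_inj_uniq ?iota_uniq // => k1 k2 [].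
rewrite /mid; case: ifP => _ //; case: ifP => _; rewrite ?rev_uniq //;
  case: ifP => _; by rewrite ?rev_uniq.
Qed.

Lemma owned_sub W1 W2 z : {subset W1 <= W2} -> owned W1 z -> owned W2 z.
Proof.
move=> s; rewrite /owned; case: ifP => _; first exact: s.
by case: ifP => _ /andP[h1 h2]; rewrite !s.
Qed.

Lemma liftaux_owned din x W z : path gadj x W -> z \in liftaux din x W -> owned (x :: W) z.
Proof.
elim: W din x => [|y W IH] din x /=.
  by move=> _ /through_mem [k -> _]; rewrite /owned /= -surjective_pairing mem_head.
case/andP=> g p; rewrite !mem_cat => /orP[|/orP[]].
- by case/through_mem => k -> _; rewrite /owned /= -surjective_pairing mem_head.
- by case/(mid_owned g) => _ ->; rewrite mem_head inE mem_head orbT.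
- by move/(IH _ _ p); apply: owned_sub => u h; rewrite inE h orbT.
Qed.

Lemma liftaux_uniq din x W : uniq (x :: W) -> path gadj x W -> uniq (liftaux din x W).
Proof.
elim: W din x => [|y W IH] din x /=; first by move=> _ _; apply: through_uniq.
case/andP=> nx u /andP[g p].
rewrite !cat_uniq through_uniq mid_uniq IH //= andbT; apply/andP; split.
  apply/hasPn => z; rewrite mem_cat => /orP[|].
    move/(mid_owned g) => [nt _]; apply/negP => /through_mem [k E _].
    by rewrite E in nt.
  move/(liftaux_owned p) => ow; apply/negP => /through_mem [k E _].
  by move: ow; rewrite E /owned /= -surjective_pairing => h; rewrite h in nx.
apply/hasPn => z /(liftaux_owned p) ow; apply/negP => /(mid_owned g) [_ E].
by move: ow; rewrite E => /andP[h _]; rewrite h in nx.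
Qed.


Lemma liftaux_head din x W : exists r, liftaux din x W = attach a P x.1 x.2 din :: r.
Proof.
case: W => [|y W] /=.
  by have [r1 [r2 [E1 E2]]] := through_ends x din dE; exists r1; rewrite E1.
by have [r1 [r2 [E1 E2]]] := through_ends x din (dir_to x y); rewrite E1; eexists.
Qed.

Lemma liftaux_last din x W :
  exists r, liftaux din x W = rcons r (attach a P (last x W).1 (last x W).2 dE).
Proof.
elim: W din x => [|y W IH] din x /=.
  by have [r1 [r2 [E1 E2]]] := through_ends x din dE; exists r2.
have [r E] := IH (dir_to y x) y.
by rewrite E; exists (through x din (dir_to x y) ++ mid x y ++ r); rewrite -!cats1 -!catA.
Qed.

Lemma liftaux_chain din x W : path gadj x W -> all inb (x :: W) -> chain (liftaux din x W).
Proof.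
elim: W din x => [|y W IH] din x /=.
  by move=> _ /andP[h _]; apply: through_chain.
case/andP=> g p /andP[ix /andP[iy iW]].
have [r1 [r2 [E1 E2]]] := through_ends x din (dir_to x y).
have [r E] := liftaux_head (dir_to y x) y W.
have CL : chain (liftaux (dir_to y x) y W) by apply: IH => //=; rewrite iy.
rewrite E2 E -cats1 -catA /=; apply: chain_catJ.
  by rewrite cats1 -E2; apply: through_chain.
rewrite -cat_cons; apply: chain_catJ; first exact: edge_chain.
by rewrite -E.
Qed.

Lemma liftaux_vertex din x W z : path gadj x W -> all inb (x :: W) ->
  z \in liftaux din x W -> is_vertex a P z.
Proof.
have TV u d1 d2 : inb u -> z \in through u d1 d2 -> is_vertex a P z.
  by case/andP=> h1 h2 /through_mem [k -> lt] /=; split.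
elim: W din x => [|y W IH] din x /=.
  by move=> _ /andP[h _]; apply: TV.
case/andP=> g p /andP[ix /andP[iy iW]]; rewrite !mem_cat => /orP[|/orP[]].
- exact: TV.
- clear IH p iW; move: g ix iy; case: x => i j; case: y => i' j'.
  case/gadjP => [[-> ->]|[-> ->]|[-> ->]|[-> ->]];
  rewrite ?midE_E ?midE_W ?midN_N ?midN_S ?mem_rev /hmid /vmid /inb /= => h1 h2;
  case/mapP => k; rewrite mem_iota => /andP[_ lt] -> /=; split=> //; lia.
- by apply: IH => //=; rewrite iy.
Qed.

Lemma liftaux_suffix W1 y W2 din x :
  {subset liftaux (dir_to y (last x W1)) y W2 <= liftaux din x (W1 ++ y :: W2)}.
Proof.
elim: W1 din x => [|z W1 IH] din x /= u h.
  by rewrite !mem_cat h !orbT.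
by rewrite !mem_cat (IH _ _ _ h) !orbT.
Qed.


Lemma lift_triple din x0 W' A B n1 x n2 :
  x0 :: W' = A ++ [:: n1; x; n2] ++ B ->
  {subset through x (dir_to x n1) (dir_to x n2) <= liftaux din x0 W'}.
Proof.
case: A => [|c A] E u h.
  by move: E => /= [-> ->]; rewrite /= !mem_cat h !orbT.
move: E => /= [-> ->]; have := @liftaux_suffix (A ++ [:: n1]) x (n2 :: B) din c u.
rewrite last_cat /= -catA /=; apply.
by rewrite /= !mem_cat h.
Qed.

Lemma lift_edge din x0 W' A B x y :
  x0 :: W' = A ++ [:: x; y] ++ B -> {subset mid x y <= liftaux din x0 W'}.
Proof.
case: A => [|c A] E u h.
  by move: E => /= [-> ->]; rewrite /= !mem_cat h orbT.
move: E => /= [-> ->]; have := @liftaux_suffix A x (y :: B) din c u; apply.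
by rewrite /= !mem_cat h orbT.
Qed.


Fixpoint gchain (s : seq gv) : bool :=
  match s with
  | x :: ((y :: _) as s') => gadj x y && gchain s'
  | _ => true
  end.

Lemma gchain_cons x y W : gchain [:: x, y & W] = gadj x y && gchain (y :: W).
Proof. by []. Qed.

Lemma gchain_path x W : gchain (x :: W) = path gadj x W.
Proof. by elim: W x => [|y W IH] x //; rewrite gchain_cons IH. Qed.

Lemma gadj_sym x y : gadj x y = gadj y x.
Proof. by rewrite /gadj; case: (y == _) (x == _) (y == (_, _)) (x == (_,_)) => [] [] [] []. Qed.

Lemma gchain_cat s1 x s2 :
  gchain (rcons s1 x ++ s2) = gchain (rcons s1 x) && gchain (x :: s2).
Proof.
elim: s1 => [|y s1 IH] /=; first by case: s2.
rewrite IH; case: s1 {IH} => [|z s1] /=; first by rewrite andbT.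
by rewrite andbA.
Qed.

Lemma gchain_catJ s1 s2 x y : gchain (rcons s1 x) -> gchain (y :: s2) -> gadj x y ->
  gchain (rcons s1 x ++ y :: s2).
Proof.
move=> h1 h2 g; have E : rcons s1 x ++ y :: s2 = rcons (rcons s1 x) y ++ s2.
  by rewrite -!cats1 -!catA.
rewrite E gchain_cat h2 andbT.
by rewrite -cats1 gchain_cat h1 /= g.
Qed.

Lemma gchain_rev s : gchain (rev s) = gchain s.
Proof.
elim: s => [|x s IH] //; case: s IH => [|y s] IH //.
rewrite rev_cons -cats1 rev_cons gchain_cat -rev_cons IH gchain_cons /=.
by rewrite gadj_sym andbT andbC.
Qed.


Definition range (x y : nat) : seq nat :=
  if x <= y then iota x (y - x).+1 else rev (iota y (x - y).+1).

Definition colseg (i x y : nat) : seq gv := [seq (i, r) | r <- range x y].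

Lemma mem_range x y r : (r \in range x y) = (minn x y <= r <= maxn x y).
Proof.
rewrite /range; case: leqP => h; rewrite ?mem_rev mem_iota; apply/idP/idP; lia.
Qed.

Lemma range_uniq x y : uniq (range x y).
Proof. by rewrite /range; case: ifP; rewrite ?rev_uniq iota_uniq. Qed.

Lemma iota_rcons m n : iota m n.+1 = rcons (iota m n) (m + n).
Proof. by rewrite -cats1 -addn1 iotaD. Qed.

Lemma range_head x y : exists l, range x y = x :: l.
Proof.
rewrite /range; case: leqP => h; first by eexists.
rewrite iota_rcons rev_rcons; eexists; congr (_ :: _); lia.
Qed.

Lemma range_last x y : exists l, range x y = rcons l y.
Proof.
rewrite /range; case: leqP => h; last by rewrite /= rev_cons; eexists.
rewrite iota_rcons; eexists; congr (rcons _ _); lia.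
Qed.

Lemma gchain_up i r n : gchain [seq (i, k) | k <- iota r n].
Proof.
elim: n r => [|n IH] r //; case: n IH => [|n] IH //.
have -> : [seq (i, k) | k <- iota r n.+2] = (i, r) :: [seq (i, k) | k <- iota r.+1 n.+1] by [].
by rewrite gchain_cons IH andbT /gadj /= eqxx !orbT.
Qed.

Lemma gchain_colseg i x y : gchain (colseg i x y).
Proof.
rewrite /colseg /range; case: ifP => _; first exact: gchain_up.
by rewrite map_rev gchain_rev gchain_up.
Qed.

Lemma mem_colseg i x y z : (z \in colseg i x y) = (z.1 == i) && (minn x y <= z.2 <= maxn x y).
Proof.
case: z => i' r /=; apply/mapP/idP.
  by case=> r' h [-> ->]; rewrite eqxx -mem_range h.
by case/andP => /eqP -> h; exists r => //; rewrite mem_range.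
Qed.

Lemma colseg_uniq i x y : uniq (colseg i x y).
Proof. by rewrite map_inj_uniq ?range_uniq // => r1 r2 [->]. Qed.

Lemma colseg_head i x y : exists l, colseg i x y = (i, x) :: l.
Proof. by have [l E] := range_head x y; rewrite /colseg E /=; eexists. Qed.

Lemma colseg_last i x y : exists l, colseg i x y = rcons l (i, y).
Proof. by have [l E] := range_last x y; rewrite /colseg E map_rcons; eexists. Qed.


Definition cm (m n : nat) (R : nat -> nat) : seq gv :=
  flatten [seq colseg i (R i.-1) (R i) | i <- iota m n].

Lemma cm_cons m n R : cm m n.+1 R = colseg m (R m.-1) (R m) ++ cm m.+1 n R.
Proof. by []. Qed.

Lemma cm_cat m n1 n2 R : cm m (n1 + n2) R = cm m n1 R ++ cm (m + n1) n2 R.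
Proof. by rewrite /cm iotaD map_cat flatten_cat. Qed.

Lemma mem_cm m n R z : (z \in cm m n R) =
  (m <= z.1 < m + n) && (minn (R z.1.-1) (R z.1) <= z.2 <= maxn (R z.1.-1) (R z.1)).
Proof.
case: z => zi zj /=.
elim: n m => [|n IH] m; first by rewrite /cm /=; apply/esym/negbTE; lia.
rewrite cm_cons mem_cat IH mem_colseg /=.
case: (eqVneq zi m) => [->|ne] /=.
  rewrite leqnn; apply/idP/idP; [case/orP; lia|move=> h; apply/orP; left; lia].
apply/idP/idP => h; [move: h|apply/andP; split].
- case/andP => h1 h2; apply/andP; split=> //; lia.
- move: h ne; clear; lia.
- by case/andP: h.
Qed.

Lemma cm_uniq m n R : uniq (cm m n R).
Proof.
elim: n m => [|n IH] m //; rewrite cm_cons cat_uniq colseg_uniq IH andbT /=.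
apply/hasPn => z; rewrite mem_cm mem_colseg => /andP[h _]; apply/negP => /andP[/eqP e _].
lia.
Qed.

Lemma cm_head m n R : exists c, cm m n.+1 R = (m, R m.-1) :: c.
Proof. by have [l E] := colseg_head m (R m.-1) (R m); rewrite cm_cons E; eexists. Qed.

Lemma cm_last m n R : exists c, cm m n.+1 R = rcons c (m + n, R (m + n)).
Proof.
elim: n m => [|n IH] m.
  by have [l E] := colseg_last m (R m.-1) (R m); rewrite cm_cons E cats0 addn0; eexists.
have [c E] := IH m.+1; rewrite cm_cons E addSnnS; exists (colseg m (R m.-1) (R m) ++ c).
by rewrite rcons_cat.
Qed.

Lemma cm_gchain m n R : gchain (cm m n R).
Proof.
elim: n m => [|n IH] m //; case: n IH => [|n] IH.
  by rewrite cm_cons cats0 gchain_colseg.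
rewrite cm_cons; have [l E] := colseg_last m (R m.-1) (R m).
have [c E2] := cm_head m.+1 n R.
rewrite E E2 gchain_catJ //; first by rewrite -E gchain_colseg.
  by rewrite -E2 IH.
by rewrite /gadj /= eqxx.
Qed.

Lemma cm_ext m n R R' : (forall i, m.-1 <= i < m + n -> R i = R' i) -> cm m n R = cm m n R'.
Proof.
move=> E; rewrite /cm; congr flatten; apply/eq_in_map => i; rewrite mem_iota => h.
by rewrite !E //; lia.
Qed.


Definition nb1 (i u j : nat) : gv :=
  if j == u then (i.-1, j) else if u < j then (i, j.-1) else (i, j.+1).
Definition nb2 (i j y : nat) : gv :=
  if j == y then (i.+1, j) else if j < y then (i, j.+1) else (i, j.-1).

Lemma iota_split m n j : m <= j < m + n ->
  iota m n = iota m (j - m) ++ j :: iota j.+1 (m + n - j.+1).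
Proof.
move=> h; rewrite {1}(_ : n = (j - m) + (m + n - j.+1).+1); last by lia.
by rewrite iotaD (_ : m + (j - m) = j) //; lia.
Qed.

Lemma join3 {T : Type} (L1 L2 A B : seq T) n1 x n2 :
  L1 = rcons A n1 -> L2 = n2 :: B -> L1 ++ x :: L2 = A ++ [:: n1; x; n2] ++ B.
Proof. by move=> -> ->; rewrite -cats1 -catA. Qed.

Lemma L1up i u j : u <= j ->
  exists A, (i.-1, u) :: [seq (i, r) | r <- iota u (j - u)] = rcons A (nb1 i u j).
Proof.
move=> h; rewrite /nb1; case: eqP => [->|ne]; first by exists [::]; rewrite subnn.
have -> : j - u = (j - u).-1.+1 by lia.
rewrite iota_rcons map_rcons -rcons_cons (_ : u < j); last by lia.
by eexists; congr rcons; congr pair; lia.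
Qed.

Lemma L2up i j y : j <= y ->
  exists B, [seq (i, r) | r <- iota j.+1 (y - j)] ++ [:: (i.+1, y)] = nb2 i j y :: B.
Proof.
move=> h; rewrite /nb2; case: eqP => [->|ne]; first by exists [::]; rewrite subnn.
have -> : y - j = (y - j).-1.+1 by lia.
by rewrite (_ : j < y); [eexists | lia].
Qed.

Lemma L1dn i u j y : j <= u -> y < u ->
  exists A, (i.-1, u) :: [seq (i, r) | r <- rev (iota j.+1 (u - j))] = rcons A (nb1 i u j).
Proof.
move=> h h'; rewrite /nb1; case: eqP => [->|ne]; first by exists [::]; rewrite subnn.
have -> : u - j = (u - j).-1.+1 by lia.
rewrite /= rev_cons map_rcons -rcons_cons (_ : (u < j) = false); last by lia.
by eexists.
Qed.

Lemma L2dn i j y : y <= j ->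
  exists B, [seq (i, r) | r <- rev (iota y (j - y))] ++ [:: (i.+1, y)] = nb2 i j y :: B.
Proof.
move=> h; rewrite /nb2; case: eqP => [->|ne]; first by exists [::]; rewrite subnn.
have -> : j - y = (j - y).-1.+1 by lia.
rewrite iota_rcons rev_rcons /= (_ : (j < y) = false); last by lia.
by eexists; congr (_ :: _); congr pair; lia.
Qed.

Lemma col_triple i u y j : minn u y <= j <= maxn u y ->
  exists A B, (i.-1, u) :: colseg i u y ++ [:: (i.+1, y)] =
              A ++ [:: nb1 i u j; (i, j); nb2 i j y] ++ B.
Proof.
move=> hj; rewrite /colseg /range; case: (leqP u y) => uy.
  rewrite (@iota_split u _ j); last by lia.
  rewrite (_ : u + (y - u).+1 - j.+1 = y - j); last by lia.
  have [A EA] := @L1up i u j ltac:(lia).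
  have [B EB] := @L2up i j y ltac:(lia).
  by exists A, B; rewrite map_cat -catA -cat_cons EA /= EB -cats1 -catA.
rewrite (@iota_split y _ j); last by lia.
rewrite (_ : y + (u - y).+1 - j.+1 = u - j); last by lia.
have [A EA] := @L1dn i u j y ltac:(lia) ltac:(lia).
have [B EB] := @L2dn i j y ltac:(lia).
by exists A, B; rewrite rev_cat rev_cons -cats1 map_cat -catA map_cat -catA -cat_cons EA /= EB -cats1 -catA.
Qed.


Definition isub {T : Type} (L W : seq T) := exists A B, W = A ++ L ++ B.

Lemma isub_catl {T : Type} (L W X : seq T) : isub L W -> isub L (X ++ W).
Proof. by case=> A [B ->]; exists (X ++ A), B; rewrite catA. Qed.
Lemma isub_catr {T : Type} (L W X : seq T) : isub L W -> isub L (W ++ X).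
Proof. by case=> A [B ->]; exists A, (B ++ X); rewrite !catA. Qed.

Lemma col_vedge i u y j : minn u y <= j < maxn u y ->
  isub [:: (i, j); (i, j.+1)] (colseg i u y) \/ isub [:: (i, j.+1); (i, j)] (colseg i u y).
Proof.
move=> hj; rewrite /colseg /range; case: (leqP u y) => uy.
  rewrite (@iota_split u _ j); last by lia.
  have -> : u + (y - u).+1 - j.+1 = (u + (y - u).+1 - j.+2).+1 by lia.
  left; exists [seq (i, r) | r <- iota u (j - u)], [seq (i, r) | r <- iota j.+2 (u + (y - u).+1 - j.+2)].
  by rewrite map_cat.
rewrite (@iota_split y _ j); last by lia.
have -> : y + (u - y).+1 - j.+1 = (y + (u - y).+1 - j.+2).+1 by lia.
right; exists [seq (i, r) | r <- rev (iota j.+2 (y + (u - y).+1 - j.+2))],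
  [seq (i, r) | r <- rev (iota y (j - y))].
by rewrite rev_cat /= !rev_cons -!cats1 !map_cat -!catA.
Qed.

Lemma cm_split3 i R : 2 <= i <= a.-1 ->
  cm 1 a R = cm 1 (i - 2) R ++ colseg i.-1 (R i.-2) (R i.-1) ++ colseg i (R i.-1) (R i)
             ++ colseg i.+1 (R i) (R i.+1) ++ cm i.+2 (a - i.+1) R.
Proof.
move=> h; have -> : a = (i - 2) + (3 + (a - i.+1)) by lia.
rewrite cm_cat cm_cat.
have -> : 1 + (i - 2) = i.-1 by lia.
have -> : i.-1 + 3 = i.+2 by lia.
have -> : i - 2 + (3 + (a - i.+1)) - i.+1 = a - i.+1 by lia.
have E : i.-1.+1 = i by lia.
rewrite !cm_cons E /cm /= cats0.
by rewrite -!catA.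
Qed.


Lemma W_triple i j R : 2 <= i <= a.-1 ->
  minn (R i.-1) (R i) <= j <= maxn (R i.-1) (R i) ->
  isub [:: nb1 i (R i.-1) j; (i, j); nb2 i j (R i)] (cm 1 a R).
Proof.
move=> hi hj; rewrite (cm_split3 R hi).
have [l1 E1] := colseg_last i.-1 (R i.-2) (R i.-1).
have [l3 E3] := colseg_head i.+1 (R i) (R i.+1).
have [A [B E]] := col_triple i hj.
have -> : cm 1 (i - 2) R ++ colseg i.-1 (R i.-2) (R i.-1) ++ colseg i (R i.-1) (R i) ++
    colseg i.+1 (R i) (R i.+1) ++ cm i.+2 (a - i.+1) R =
  (cm 1 (i - 2) R ++ l1) ++ ((i.-1, R i.-1) :: colseg i (R i.-1) (R i) ++ [:: (i.+1, R i)])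
    ++ (l3 ++ cm i.+2 (a - i.+1) R).
  by rewrite E1 E3 -cats1 -!catA /= -!catA.
by apply: isub_catl; apply: isub_catr; exists A, B.
Qed.

Lemma cm0 m R : cm m 0 R = [::].
Proof. by []. Qed.

Lemma W_hedge i R : 1 <= i <= a.-1 -> isub [:: (i, R i); (i.+1, R i)] (cm 1 a R).
Proof.
move=> hi; rewrite {1}(_ : a = (i.-1 + (2 + (a - i.+1)))); last by lia.
rewrite cm_cat cm_cat (_ : 1 + i.-1 = i); last by lia.
have [l1 E1] := colseg_last i (R i.-1) (R i).
have [l3 E3] := colseg_head i.+1 (R i) (R i.+1).
rewrite !cm_cons cm0 cats0 E1 E3 /=.
apply: isub_catl; apply: isub_catr; exists l1, l3; by rewrite -cats1 -!catA.
Qed.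

Lemma W_vedge i j R : 1 <= i <= a -> minn (R i.-1) (R i) <= j < maxn (R i.-1) (R i) ->
  isub [:: (i, j); (i, j.+1)] (cm 1 a R) \/ isub [:: (i, j.+1); (i, j)] (cm 1 a R).
Proof.
move=> hi hj; rewrite {1 2}(_ : a = (i.-1 + (1 + (a - i)))); last by lia.
rewrite cm_cat cm_cat (_ : 1 + i.-1 = i); last by lia.
rewrite cm_cons cm0 cats0.
by case: (col_vedge i hj) => h; [left|right]; apply: isub_catl; apply: isub_catr.
Qed.


Definition lift (W : seq gv) : seq node := if W is x :: W' then liftaux dW x W' else [::].

Lemma lift_isub3 W n1 x n2 : isub [:: n1; x; n2] W ->
  {subset through x (dir_to x n1) (dir_to x n2) <= lift W}.
Proof.
case=> A [B E]; case: W E => [|x0 W'] E; first by case: A E.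
exact: lift_triple E.
Qed.

Lemma lift_isub2 W x y : isub [:: x; y] W -> {subset mid x y <= lift W}.
Proof.
case=> A [B E]; case: W E => [|x0 W'] E; first by case: A E.
exact: lift_edge E.
Qed.

Definition dinv (u j : nat) := if j == u then dW else if u < j then dS else dN.
Definition doutv (j y : nat) := if j == y then dE else if j < y then dN else dS.

Lemma dir_nb1 i u j : 1 <= i -> 1 <= j -> dir_to (i, j) (nb1 i u j) = dinv u j.
Proof.
move=> hi hj; rewrite /nb1 /dinv; case: eqP => _.
  by rewrite -{1}(prednK hi) dirE_W.
by case: ifP => _; [rewrite -{1}(prednK hj) dirN_S | rewrite dirN_N].
Qed.

Lemma dir_nb2 i j y : 1 <= j -> dir_to (i, j) (nb2 i j y) = doutv j y.
Proof.
move=> hj; rewrite /nb2 /doutv; case: eqP => _; first by rewrite dirE_E.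
by case: ifP => _; [rewrite dirN_N | rewrite -{1}(prednK hj) dirN_S].
Qed.

Definition vgood q u y j :=
  (minn u y <= j <= maxn u y) && (onp q (dinv u j) != onp q (doutv j y)).

Definition rgood (v : node) (u y : nat) : bool :=
  match v with
  | (0, i, j, _) => vgood (pat P i j) u y j
  | (1, i, j, _) => y == j
  | (2, i, j, _) => (minn u y <= j < maxn u y)
  | _ => false
  end.

Lemma node_in_lift v R : in_int a P 1 v -> rgood v (R (ni v).-1) (R (ni v)) ->
  v \in lift (cm 1 a R).
Proof.
case: v => [[[t i] j] k]; rewrite /ni /=.
case=> vv; case: t vv => [|[|[|t]]] //=.
- case=> _ _ hk [hi hj] /andP[hb hd].
  have hi' : 2 <= i <= a.-1 by lia.
  apply: (lift_isub3 (W_triple (R:=R) hi' hb)).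
  rewrite dir_nb1 ?dir_nb2; try lia.
  rewrite /through /=; move: hd; case: (onp _ (dinv _ _)) (onp _ (doutv _ _)) => [] [] //= _;
    rewrite ?mem_rev /vseq; apply/mapP; exists k => //; rewrite mem_iota; lia.
- case=> _ _ hk [hi [hi2 hj]] /eqP E.
  have hi' : 1 <= i <= a.-1 by lia.
  apply: (lift_isub2 (W_hedge R hi')); rewrite E midE_E /hmid.
  apply/mapP; exists k => //; rewrite mem_iota; lia.
- case=> _ _ hk [hi [hj hj2]] hb.
  have hi' : 1 <= i <= a by lia.
  case: (W_vedge hi' hb) => /lift_isub2; apply; rewrite ?midN_N ?midN_S ?mem_rev /vmid;
  apply/mapP; exists k => //; rewrite mem_iota; lia.
Qed.


Lemma attach_b i j d : deg4 a i j = false -> attach a P i j d = (0, i, j, 0).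
Proof. by move=> h; rewrite /attach /vlen h; case: ifP. Qed.

Lemma vlen_b i j : deg4 a i j = false -> vlen a P i j = 1.
Proof. by move=> h; rewrite /vlen h. Qed.

Lemma deg4_1 j : deg4 a 1 j = false.
Proof. by rewrite /deg4. Qed.

Lemma deg4_a j : 1 <= a -> deg4 a a j = false.
Proof. by move=> h; rewrite /deg4; apply/negbTE; lia. Qed.

Lemma vmid_split i j k : k <= vsub P i j ->
  vmid i j = [seq (2, i, j, m) | m <- iota 0 k] ++ [seq (2, i, j, m) | m <- iota k (vsub P i j - k)].
Proof.
move=> h; rewrite /vmid -map_cat -iotaD; congr map; congr iota; lia.
Qed.

Lemma cs_1 (x y : node) A B : chain (rev (x :: ((A ++ B) ++ [:: y]))) -> chain (rev A ++ [:: x]).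
Proof. by rewrite -catA -cat_cons rev_cat => /chain_catr; rewrite rev_cons cats1. Qed.
Lemma cs_2 (x y : node) A B : chain (x :: ((A ++ B) ++ [:: y])) -> chain (B ++ [:: y]).
Proof. by rewrite -catA -cat_cons => /chain_catr. Qed.
Lemma cs_3 (x y : node) A B : chain (x :: ((A ++ B) ++ [:: y])) -> chain (x :: A).
Proof. by rewrite -catA -cat_cons => /chain_catl. Qed.
Lemma cs_4 (x y : node) A B : chain (rev (x :: ((A ++ B) ++ [:: y]))) -> chain (y :: rev B).
Proof. by rewrite -catA -cat_cons rev_cat => /chain_catl; rewrite rev_cat. Qed.

Lemma start_ok s r1 : 2 <= a -> in_column a P 1 s -> 1 <= r1 <= a ->
  exists R0 pre, [/\ 1 <= R0 <= a, chain (pre ++ [:: (0, 1, R0, 0)]),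
    exists q, pre ++ [:: (0, 1, R0, 0)] = s :: q, uniq pre &
    forall z, z \in pre -> [/\ is_vertex a P z, ntag z = 2, ni z = 1 &
       ~~ (((1, nj z) \in colseg 1 R0 r1) && ((1, (nj z).+1) \in colseg 1 R0 r1))]].
Proof.
move=> a2; case: s => [[[t i] j] k]; case=> vv; case: t vv => [|[|[|t]]] //=.
- case=> hi hj hk ei hr; subst i; have -> : k = 0 by move: hk; rewrite vlen_b ?deg4_1 //; lia.
  by exists j, [::]; split=> //; exists [::].
- case=> hi hj hk ei hr1; subst i.
  have VT : vertseq a P 1 j = (0, 1, j, 0) :: vmid 1 j ++ [:: (0, 1, j.+1, 0)].
    by rewrite /vertseq !attach_b ?deg4_1.
  have PC : piece a P (vertseq a P 1 j) by exists 1, j; right; right; split.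
  case: (leqP r1 j) => hr.
  + exists j, (rev [seq (2, 1, j, m) | m <- iota 0 k.+1]); split=> //.
    * lia.
    * by have := piece_rev_chain PC; rewrite VT (vmid_split hk); apply: cs_1.
    * by rewrite iota_rcons map_rcons rev_rcons add0n /=; eexists.
    * by rewrite rev_uniq map_inj_uniq ?iota_uniq // => ? ? [].
    * move=> z; rewrite mem_rev => /mapP [m]; rewrite mem_iota => hm ->; split=> //=.
        by split=> //; lia.
      apply/negP; rewrite /nj !mem_colseg /= => /and3P[_ _ h]; lia.
  + exists j.+1, [seq (2, 1, j, m) | m <- iota k (vsub P 1 j - k)]; split.
    * lia.
    * by have := piece_chain PC; rewrite VT (vmid_split (ltnW hk)); apply: cs_2.
    * rewrite (_ : vsub P 1 j - k = (vsub P 1 j - k).-1.+1); last by lia.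
      by eexists.
    * by rewrite map_inj_uniq ?iota_uniq // => ? ? [].
    * move=> z /mapP [m]; rewrite mem_iota => hm ->; split=> //=.
        by split=> //; lia.
      apply/negP; rewrite /nj !mem_colseg /= => /and3P[h _ _]; lia.
Qed.


Lemma end_ok t ra : 2 <= a -> in_column a P a t -> 1 <= ra <= a ->
  exists Ra post, [/\ 1 <= Ra <= a, chain ((0, a, Ra, 0) :: post),
    exists q, (0, a, Ra, 0) :: post = rcons q t, uniq post &
    forall z, z \in post -> [/\ is_vertex a P z, ntag z = 2, ni z = a &
       ~~ (((a, nj z) \in colseg a ra Ra) && ((a, (nj z).+1) \in colseg a ra Ra))]].
Proof.
move=> a2; case: t => [[[t i] j] k]; case=> vv; case: t vv => [|[|[|t]]] //=.
- case=> hi hj hk ei hr; subst i; have -> : k = 0.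
    by move: hk; rewrite vlen_b ?deg4_a //; lia.
  by exists j, [::]; split=> //; exists [::].
- case=> hi hj hk ei hr1; subst i.
  have VT : vertseq a P a j = (0, a, j, 0) :: vmid a j ++ [:: (0, a, j.+1, 0)].
    by rewrite /vertseq !attach_b ?deg4_a //; lia.
  have PC : piece a P (vertseq a P a j) by exists a, j; right; right; split=> //; lia.
  case: (leqP ra j) => hr.
  + exists j, [seq (2, a, j, m) | m <- iota 0 k.+1]; split=> //.
    * lia.
    * by have := piece_chain PC; rewrite VT (vmid_split hk); apply: cs_3.
    * by rewrite iota_rcons map_rcons add0n -rcons_cons; eexists.
    * by rewrite map_inj_uniq ?iota_uniq // => ? ? [].
    * move=> z /mapP [m]; rewrite mem_iota => hm ->; split=> //=.
        by split=> //; lia.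
      apply/negP; rewrite /nj !mem_colseg /= => /and3P[_ _ h]; lia.
  + exists j.+1, (rev [seq (2, a, j, m) | m <- iota k (vsub P a j - k)]); split.
    * lia.
    * by have := piece_rev_chain PC; rewrite VT (vmid_split (ltnW hk)); apply: cs_4.
    * rewrite (_ : vsub P a j - k = (vsub P a j - k).-1.+1); last by lia.
      by rewrite /= rev_cons -rcons_cons; eexists.
    * by rewrite rev_uniq map_inj_uniq ?iota_uniq // => ? ? [].
    * move=> z; rewrite mem_rev => /mapP [m]; rewrite mem_iota => hm ->; split=> //=.
        by split=> //; lia.
      apply/negP; rewrite /nj !mem_colseg /= => /and3P[h _ _]; lia.
Qed.


Lemma owned2 W z : ntag z = 2 -> owned W z = ((ni z, nj z) \in W) && ((ni z, (nj z).+1) \in W).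
Proof. by move=> h; rewrite /owned h. Qed.

Lemma head_join (pre rest : seq node) x s q d :
  pre ++ [:: x] = s :: q -> head d (pre ++ x :: rest) = s.
Proof. by case: pre => [|y pre] /= [->]. Qed.

Lemma last_join (X post : seq node) y t q d :
  y :: post = rcons q t -> last d (X ++ y :: post) = t.
Proof. by move=> E; rewrite last_cat /= -(last_cons (last d X)) E last_rcons. Qed.

Lemma assembly s t v w r1 ra Wmid :
  2 <= a -> in_column a P 1 s -> in_column a P a t ->
  1 <= r1 <= a -> 1 <= ra <= a ->
  gchain ((1, r1) :: Wmid ++ [:: (a, ra)]) -> uniq Wmid ->
  (forall z, z \in Wmid -> (2 <= z.1 <= a.-1) && (1 <= z.2 <= a)) ->
  (forall R0 Ra, 1 <= R0 <= a -> 1 <= Ra <= a ->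
      (v \in lift (colseg 1 R0 r1 ++ Wmid ++ colseg a ra Ra)) &&
      (w \in lift (colseg 1 R0 r1 ++ Wmid ++ colseg a ra Ra))) ->
  exists p, gpath_between a P p s t /\ v \in p /\ w \in p.
Proof.
move=> a2 cs ct hr1 hra gc uW bW VW.
have [R0 [pre [hR0 cpre [q Eq] upre Ppre]]] := start_ok a2 cs hr1.
have [Ra [post [hRa cpost [q' Eq'] upost Ppost]]] := end_ok a2 ct hra.
have /andP[vL wL] := VW R0 Ra hR0 hRa.
move: vL wL.
set W := colseg 1 R0 r1 ++ Wmid ++ colseg a ra Ra.
have [l1 E1] := colseg_head 1 R0 r1.
have EW : W = (1, R0) :: (l1 ++ Wmid ++ colseg a ra Ra) by rewrite /W E1.
set W' := l1 ++ Wmid ++ colseg a ra Ra.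
have memW z : z \in W -> (z.1 == 1 -> z \in colseg 1 R0 r1) /\ (z.1 == a -> z \in colseg a ra Ra).
  rewrite !mem_cat => /or3P [h|h|h].
  - split=> // /eqP e; move: h; rewrite !mem_colseg => /andP[/eqP e' _]; lia.
  - by have := bW z h; split=> /eqP e; lia.
  - split=> // /eqP e; move: h; rewrite !mem_colseg => /andP[/eqP e' _]; lia.
have gW : gchain W.
  have [l0 E0] := colseg_last 1 R0 r1; have [l2 E2] := colseg_head a ra Ra.
  rewrite /W E0 E2 gchain_cat -E0 gchain_colseg andTb.
  have -> : (1, r1) :: Wmid ++ (a, ra) :: l2 = rcons ((1, r1) :: Wmid) (a, ra) ++ l2.
    by rewrite -cats1 /= -catA.
  by rewrite gchain_cat -cats1 gc -E2 gchain_colseg.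
have uWW : uniq W.
  rewrite /W !cat_uniq !colseg_uniq uW /= andbT; apply/andP; split.
    apply/hasPn => z; rewrite mem_cat => /orP[h|h]; apply/negP; rewrite mem_colseg => /andP[/eqP e _].
      by have := bW z h; lia.
    by move: h; rewrite mem_colseg => /andP[/eqP e' _]; lia.
  apply/hasPn => z h; apply/negP => h'; have := bW z h'; move: h; rewrite mem_colseg.
  by move=> /andP[/eqP e _]; lia.
have iW : all inb W.
  apply/allP => -[zi zj]; rewrite /inb !mem_cat => /or3P [h|h|h].
  - move: h; rewrite mem_colseg /= => /andP[/eqP e h]; apply/andP; split; lia.
  - by have := bW _ h; case/andP => /= h1 h2; apply/andP; split=> //; lia.
  - move: h; rewrite mem_colseg /= => /andP[/eqP e h]; apply/andP; split; lia.
have pW : path gadj (1, R0) W' by rewrite -gchain_path -EW.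
have uW2 : uniq ((1, R0) :: W') by rewrite -EW.
have iW2 : all inb ((1, R0) :: W') by rewrite -EW.
have EL : lift W = liftaux dW (1, R0) W' by rewrite EW.
rewrite EL => vL wL.
have lastW : last (1, R0) W' = (a, Ra).
  have [l3 E3] := colseg_last a ra Ra.
  by rewrite /W' E3 !last_cat last_rcons.
have [r Er] : exists r, liftaux dW (1, R0) W' = (0, 1, R0, 0) :: r.
  have [r Er] := liftaux_head dW (1, R0) W'.
  by exists r; rewrite Er attach_b ?deg4_1.
have [r' Er'] : exists r', liftaux dW (1, R0) W' = rcons r' (0, a, Ra, 0).
  have [r' Er'] := liftaux_last dW (1, R0) W'.
  by exists r'; rewrite Er' lastW attach_b ?deg4_a ?(ltnW a2).
have CL : chain (liftaux dW (1, R0) W') by apply: liftaux_chain.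
have UL : uniq (liftaux dW (1, R0) W') by apply: liftaux_uniq.
have VL z : z \in liftaux dW (1, R0) W' -> is_vertex a P z.
  by move=> h; apply: (liftaux_vertex pW iW2 h).
have OL z : z \in liftaux dW (1, R0) W' -> owned W z.
  by move=> h; rewrite EW; apply: liftaux_owned pW h.
set L := liftaux dW (1, R0) W' in vL wL Er Er' CL UL VL OL.
clearbody L.
exists (pre ++ L ++ post); split; last by rewrite !mem_cat vL wL !orbT.
have cp : chain (pre ++ L ++ post).
  have c1 : chain (pre ++ L) by rewrite Er; apply: chain_catJ => //; rewrite -Er.
  have -> : pre ++ L ++ post = (pre ++ r') ++ (0, a, Ra, 0) :: post.
    by rewrite Er' -cats1 -!catA.
  apply: chain_catJ => //; by rewrite -catA cats1 -Er'.
split; [split| ].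
- rewrite cat_uniq upre cat_uniq UL upost andbT andTb; apply/andP; split.
    apply/hasPn => z; rewrite mem_cat => /orP[h|h]; apply/negP => h'.
      have [_ T2 N1 NO] := Ppre z h'.
      have := OL z h; rewrite owned2 // N1 => /andP[m1 m2].
      have [c1 _] := memW _ m1; have [c2 _] := memW _ m2.
      by rewrite c1 ?c2 in NO.
    have [_ _ N1 _] := Ppre z h'; have [_ _ Na _] := Ppost z h.
    by move: a2; rewrite -Na N1.
  apply/hasPn => z h; apply/negP => h'.
  have [_ T2 Na NO] := Ppost z h.
  have := OL z h'; rewrite owned2 // Na => /andP[m1 m2].
  have [_ c1] := memW _ m1; have [_ c2] := memW _ m2.
  by rewrite c1 ?c2 in NO.
- move=> z; rewrite !mem_cat => /or3P [h|h|h].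
  + by have [] := Ppre z h.
  + exact: VL.
  + by have [] := Ppost z h.
- exact: chain_nth.
- by rewrite Er; apply: head_join Eq.
- have -> : pre ++ L ++ post = (pre ++ r') ++ (0, a, Ra, 0) :: post.
    by rewrite Er' -cats1 -!catA.
  by apply: last_join Eq'.
- by rewrite Er; case: pre {Eq Ppre upre cpre cp}.
Qed.


Definition fwdn (v : node) (u : nat) : nat :=
  match v with
  | (0, i, j, _) => match pat P i j with
                    | Q1 => if u <= j then a else 1
                    | Q2 => if j <= u then 1 else a
                    | Q3 => if u == j then 1 else j end
  | (1, _, j, _) => j
  | (2, _, j, _) => if u <= j then a else 1
  | _ => 1
  end.

Definition bwdn (v : node) (y : nat) : nat :=
  match v with
  | (0, i, j, _) => match pat P i j with
                    | Q1 => if j <= y then 1 else a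
                    | Q2 => if y <= j then a else 1
                    | Q3 => if y == j then 1 else j end
  | (2, _, j, _) => if y <= j then a else 1
  | _ => 1
  end.

Ltac crush := rewrite ?/vgood ?/dinv ?/doutv /=;
  repeat (case: ifP => ? /=); try lia.

Lemma fwd_ok v u : 5 <= a -> in_int a P 1 v -> 1 <= u <= a ->
  rgood v u (fwdn v u) && (1 <= fwdn v u <= a).
Proof.
move=> a5; case: v => [[[t i] j] k] [_]; case: t => [|[|[|t]]] //=.
- by case=> hi hj hu; case: (pat P i j); crush.
- by case=> hi [hi2 hj] hu; rewrite eqxx /=; lia.
- by case=> hi [hj hj2] hu; crush.
Qed.


Lemma bwd_ok v y : 5 <= a -> in_int a P 1 v -> ntag v != 1 -> 1 <= y <= a ->
  rgood v (bwdn v y) y && (1 <= bwdn v y <= a).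
Proof.
move=> a5; case: v => [[[t i] j] k] [_]; case: t => [|[|[|t]]] //=.
- by case=> hi hj _ hy; case: (pat P i j); crush.
- by case=> hi [hj hj2] _ hy; crush.
Qed.

Lemma fwd_neq v j : 5 <= a -> in_int a P 1 v -> ntag v != 1 -> 2 <= j <= a.-1 ->
  fwdn v j != j.
Proof.
move=> a5; case: v => [[[t i] j'] k] [_]; case: t => [|[|[|t]]] //=.
- by case=> hi hj _ hy; case: (pat P i j'); crush.
- by case=> hi [hj hj2] _ hy; crush.
Qed.

Definition isQ3 (v : node) : bool :=
  (ntag v == 0) && (if pat P (ni v) (nj v) is Q3 then true else false).

Lemma A_ok v : 5 <= a -> in_int a P 1 v -> ntag v != 1 -> ~~ isQ3 v -> rgood v 1 a.
Proof.
move=> a5; case: v => [[[t i] j] k] [_]; rewrite /isQ3 /ni /nj; case: t => [|[|[|t]]] //=.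
- by case=> hi hj _; case: (pat P i j) => //= _; crush.
- by case=> hi [hj hj2] _; crush.
Qed.

Lemma Q3_ok v y : 5 <= a -> in_int a P 1 v -> isQ3 v -> y != nj v -> 1 <= y ->
  rgood v (nj v) y.
Proof.
move=> a5; case: v => [[[t i] j] k] [_]; rewrite /isQ3 /ni /nj; case: t => [|[|[|t]]] //=.
by case=> hi hj; case: (pat P i j) => // _ hy hy1; crush.
Qed.


Lemma int_b v : in_int a P 1 v -> (2 <= ni v <= a.-1) && (2 <= nj v <= a.-1).
Proof.
case: v => [[[t i] j] k] [_]; rewrite /ni /nj; case: t => [|[|[|t]]] //= => h; lia.
Qed.

Lemma rgood1 v u y : ntag v = 1 -> rgood v u y = (y == nj v).
Proof. by case: v => [[[t i] j] k]; rewrite /ntag /= => ->. Qed.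

Lemma same_col v w : 5 <= a -> in_int a P 1 v -> in_int a P 1 w ->
  ~~ ((ntag v == 1) && (ntag w == 1) && (nj v != nj w)) ->
  exists u y, [/\ 1 <= u <= a, 1 <= y <= a, rgood v u y & rgood w u y].
Proof.
move=> a5 iv iw hvw.
have /andP[_ bv] := int_b iv; have /andP[_ bw] := int_b iw.
case hv: (ntag v == 1).
  exists (bwdn w (nj v)), (nj v).
  case hw: (ntag w == 1).
    move: hvw; rewrite hv hw /= negbK => /eqP e.
    have -> : bwdn w (nj v) = 1 by case: w iw hw {e bw} => [[[[|[|t]] i] j] k] //=.
    split=> //; try lia; rewrite rgood1 ?e //; apply/eqP => //.
  have hnj : 1 <= nj v <= a by lia.
  have /andP[g b] := bwd_ok a5 iw (negbT hw) hnj.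
  split=> //; try lia; by rewrite rgood1 //; apply/eqP.
case hw: (ntag w == 1).
  exists (bwdn v (nj w)), (nj w).
  have hnj : 1 <= nj w <= a by lia.
  have /andP[g b] := bwd_ok a5 iv (negbT hv) hnj.
  split=> //; try lia; by rewrite rgood1 //; apply/eqP.
case qv: (isQ3 v).
  exists (nj v), (fwdn w (nj v)).
  have hnj : 1 <= nj v <= a by lia.
  have /andP[g b] := fwd_ok a5 iw hnj.
  split=> //; try lia.
  apply: Q3_ok => //; try lia; first by apply: fwd_neq => //; rewrite hw.
case qw: (isQ3 w).
  exists (nj w), (fwdn v (nj w)).
  have hnj : 1 <= nj w <= a by lia.
  have /andP[g b] := fwd_ok a5 iv hnj.
  split=> //; try lia.
  apply: Q3_ok => //; try lia; first by apply: fwd_neq => //; rewrite hv.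
exists 1, a; split; try lia; apply: A_ok => //; by rewrite ?hv ?hw ?qv ?qw.
Qed.


Definition Rx (R : nat -> nat) R0 Ra i := if i == 0 then R0 else if i == a then Ra else R i.

Lemma cm_decomp R : 2 <= a ->
  cm 1 a R = colseg 1 (R 0) (R 1) ++ cm 2 (a - 2) R ++ colseg a (R a.-1) (R a).
Proof.
move=> a2; rewrite {1}(_ : a = 1 + ((a - 2) + 1)); last by lia.
rewrite cm_cat cm_cat cm_cons cm0 cats0 cm_cons cm0 cats0.
have -> : 1 + 1 = 2 by [].
have -> : 2 + (a - 2) = a by lia.
done.
Qed.

Lemma colseg_single i x : colseg i x x = [:: (i, x)].
Proof. by rewrite /colseg /range leqnn subnn. Qed.

Lemma cm_Rx R R0 Ra : 2 <= a ->
  cm 1 a (Rx R R0 Ra) = colseg 1 R0 (R 1) ++ cm 2 (a - 2) R ++ colseg a (R a.-1) Ra.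
Proof.
move=> a2; rewrite cm_decomp //.
have -> : cm 2 (a - 2) (Rx R R0 Ra) = cm 2 (a - 2) R.
  apply: cm_ext => i hi.
  have e1 : (i == 0) = false by apply/negbTE/eqP; lia.
  have e2 : (i == a) = false by apply/negbTE/eqP; lia.
  by rewrite /Rx e1 e2.
have e1 : (1 == a) = false by apply/negbTE/eqP; lia.
have e2 : (a.-1 == 0) = false by apply/negbTE/eqP; lia.
have e3 : (a.-1 == a) = false by apply/negbTE/eqP; lia.
have e4 : (a == 0) = false by apply/negbTE/eqP; lia.
by rewrite /Rx /= e1 e2 e3 e4 eqxx.

Qed.

Lemma generic s t v w R : 5 <= a -> in_column a P 1 s -> in_column a P a t ->
  in_int a P 1 v -> in_int a P 1 w -> (forall i, 1 <= i <= a.-1 -> 1 <= R i <= a) ->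
  rgood v (R (ni v).-1) (R (ni v)) -> rgood w (R (ni w).-1) (R (ni w)) ->
  exists p, gpath_between a P p s t /\ v \in p /\ w \in p.
Proof.
move=> a5 cs ct iv iw hR gv gw.
have a2 : 2 <= a by lia.
apply: (@assembly s t v w (R 1) (R a.-1) (cm 2 (a - 2) R)) => //.
- by apply: hR; lia.
- by apply: hR; lia.
- have := cm_gchain 1 a (Rx R (R 1) (R a.-1)).
  by rewrite cm_Rx // !colseg_single.
- exact: cm_uniq.
- move=> [zi zj]; rewrite mem_cm /= => /andP[h1 h2].
  have := hR zi.-1 ltac:(lia); have := hR zi ltac:(lia).
  move=> h3 h4; apply/andP; split; lia.
- move=> R0 Ra h0 ha; rewrite -cm_Rx //.
  have /andP[bv _] := int_b iv; have /andP[bw _] := int_b iw.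
  apply/andP; split; apply: node_in_lift => //.
    by rewrite /Rx !ifF //; apply/negbTE; lia.
  by rewrite /Rx !ifF //; apply/negbTE; lia.
Qed.


Lemma diff_col s t v w : 5 <= a -> in_column a P 1 s -> in_column a P a t ->
  in_int a P 1 v -> in_int a P 1 w -> ni v < ni w ->
  exists p, gpath_between a P p s t /\ v \in p /\ w \in p.
Proof.
move=> a5 cs ct iv iw lt.
set u0 := if (ni w).-1 == ni v then fwdn v 1 else 1.
pose R i := if i == ni v then fwdn v 1 else if i == ni w then fwdn w u0 else 1.
have h11 : 1 <= 1 <= a by lia.
have /andP[gv bv] := fwd_ok a5 iv h11.
have hu0 : 1 <= u0 <= a by rewrite /u0; case: ifP => _ //; lia.
have /andP[gw bw] := fwd_ok a5 iw hu0.
apply: (@generic s t v w R) => //.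
- by move=> i _; rewrite /R; case: ifP => _ //; case: ifP => _ //; lia.
- have e1 : ((ni v).-1 == ni v) = false.
    by have := int_b iv; move=> h; apply/negbTE/eqP; lia.
  have e2 : ((ni v).-1 == ni w) = false by apply/negbTE/eqP; lia.
  by rewrite /R e1 e2 eqxx.
- have e1 : (ni w == ni v) = false by apply/negbTE/eqP; lia.
  have e2 : ((ni w).-1 == ni w) = false.
    by have := int_b iw; move=> h; apply/negbTE/eqP; lia.
  have -> : R (ni w).-1 = u0 by rewrite /R /u0 e2; case: ifP.
  by rewrite /R e1 eqxx.
Qed.

Lemma same_col_main s t v w : 5 <= a -> in_column a P 1 s -> in_column a P a t ->
  in_int a P 1 v -> in_int a P 1 w -> ni v = ni w ->
  ~~ ((ntag v == 1) && (ntag w == 1) && (nj v != nj w)) ->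
  exists p, gpath_between a P p s t /\ v \in p /\ w \in p.
Proof.
move=> a5 cs ct iv iw e hvw.
have [u [y [hu hy gv gw]]] := same_col a5 iv iw hvw.
pose R i := if i == (ni v).-1 then u else if i == ni v then y else 1.
have /andP[bv _] := int_b iv.
have e1 : (ni v == (ni v).-1) = false by apply/negbTE/eqP; lia.
apply: (@generic s t v w R) => //.
- by move=> i _; rewrite /R; case: ifP => _ //; case: ifP => _ //; lia.
- by rewrite /R eqxx e1 eqxx.
- by rewrite -e /R eqxx e1 eqxx.
Qed.


Lemma gchain_link (s1 s2 p q : seq gv) x y : s1 = rcons p x -> s2 = y :: q ->
  gchain s1 -> gchain s2 -> gadj x y -> gchain (s1 ++ s2).
Proof. by move=> -> -> h1 h2 g; apply: gchain_catJ. Qed.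

Lemma isub_join {T : Type} (p q : seq T) x y : isub [:: x; y] (rcons p x ++ y :: q).
Proof. by exists p, q; rewrite -cats1 -catA. Qed.

Ltac dis := apply/hasPn => -[zi zj]; rewrite ?mem_cat ?mem_cm ?mem_colseg /= => h;
  apply/negP; rewrite ?mem_cat ?mem_cm ?mem_colseg /= => h'; lia.

Lemma special s t v w : 5 <= a -> in_column a P 1 s -> in_column a P a t ->
  in_int a P 1 v -> in_int a P 1 w -> ntag v = 1 -> ntag w = 1 -> ni v = ni w ->
  nj v < nj w -> exists p, gpath_between a P p s t /\ v \in p /\ w \in p.
Proof.
move=> a5 cs ct iv iw.
case: v iv => [[[tv c] j1] k1]; case: w iw => [[[tw c'] j2] k2].
rewrite /ntag /ni /nj /= => iw iv e1 e2 ec lt; subst tv tw c'.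
have [[_ _ hk1] [hc [hc2 hj1]]] := iv.
have [[_ _ hk2] [_ [_ hj2]]] := iw.
pose R1 := fun _ : nat => 1.
pose R2 := fun _ : nat => a.
set X1 := cm 2 (c - 2) R1.
set X2 := colseg c 1 j1.
set X3 := colseg c.+1 j1 j2.
set X4 := colseg c j2 a.
set X5 := cm c.+1 (a - c.+1) R2.
have a2 : 2 <= a by lia.
apply: (@assembly _ _ _ _ 1 a (X1 ++ X2 ++ X3 ++ X4 ++ X5)) => //; try lia.
- have E1 : (1, 1) :: X1 = cm 1 (c - 1) R1.
    by rewrite (_ : c - 1 = (c - 2).+1); [rewrite cm_cons colseg_single | lia].
  have E5 : X5 ++ [:: (a, a)] = cm c.+1 (a - c) R2.
    rewrite (_ : a - c = (a - c.+1) + 1); last by lia.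
    rewrite cm_cat cm_cons cm0 cats0 (_ : c.+1 + (a - c.+1) = a); last by lia.
    by rewrite colseg_single.
  rewrite -!catA E5 -cat_cons E1.
  have [l1 L1] := cm_last 1 (c - 2) R1.
  have [l2 H2] := colseg_head c 1 j1; have [l2' L2] := colseg_last c 1 j1.
  have [l3 H3] := colseg_head c.+1 j1 j2; have [l3' L3] := colseg_last c.+1 j1 j2.
  have [l4 H4] := colseg_head c j2 a; have [l4' L4] := colseg_last c j2 a.
  have [l5 H5] := cm_head c.+1 (a - c.+1) R2.
  rewrite (_ : c - 1 = (c - 2).+1); last by lia.
  rewrite (_ : a - c = (a - c.+1).+1); last by lia.
  apply: (gchain_link L1 (_ : _ = (c, 1) :: (l2 ++ X3 ++ X4 ++ cm c.+1 (a - c.+1).+1 R2))).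
  + by rewrite /X2 H2.
  + exact: cm_gchain.
  + apply: (gchain_link L2 (_ : _ = (c.+1, j1) :: (l3 ++ X4 ++ cm c.+1 (a - c.+1).+1 R2))).
    * by rewrite /X3 H3.
    * exact: gchain_colseg.
    * apply: (gchain_link L3 (_ : _ = (c, j2) :: (l4 ++ cm c.+1 (a - c.+1).+1 R2))).
      - by rewrite /X4 H4.
      - exact: gchain_colseg.
      - apply: (gchain_link L4 H5); [exact: gchain_colseg | exact: cm_gchain |].
        by rewrite /gadj /= eqxx.
      - by rewrite /gadj /= eqxx !orbT.
    * by rewrite /gadj /= eqxx.
  + rewrite /gadj /= (_ : 1 + (c - 2) = c.-1); last by lia.
    by rewrite (_ : c = c.-1.+1) ?eqxx //; lia.
- rewrite !cat_uniq !cm_uniq !colseg_uniq /=.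
  rewrite andbT /X1 /X2 /X3 /X4 /X5 /R1 /R2; repeat (apply/andP; split); dis.
- move=> -[zi zj]; rewrite /X1 /X2 /X3 /X4 /X5 /R1 /R2 !mem_cat !mem_cm !mem_colseg /= => h; lia.
- move=> R0 Ra _ _; apply/andP; split.
  + apply: (lift_isub2 (x := (c, j1)) (y := (c.+1, j1))).
      have [l2' L2] := colseg_last c 1 j1; have [l3 H3] := colseg_head c.+1 j1 j2.
      apply: isub_catl; apply: isub_catr; apply: isub_catl.
      rewrite catA /X2 /X3 L2 H3 ; apply: isub_catr; exact: isub_join.
    rewrite midE_E /hmid; apply/mapP; exists k1 => //; rewrite mem_iota; lia.
  + apply: (lift_isub2 (x := (c.+1, j2)) (y := (c, j2))).
      have [l3' L3] := colseg_last c.+1 j1 j2; have [l4 H4] := colseg_head c j2 a.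
      apply: isub_catl; apply: isub_catr; apply: isub_catl; apply: isub_catl.
      rewrite catA /X3 /X4 L3 H4; apply: isub_catr; exact: isub_join.
    rewrite midE_W mem_rev /hmid; apply/mapP; exists k2 => //; rewrite mem_iota; lia.
Qed.

End Proof.

Theorem lemma10 (a : nat) (P : pgparams) (s v w t : node) :
  5 <= a ->
  in_column a P 1 s -> in_int a P 1 v -> in_int a P 1 w -> in_column a P a t ->
  exists p : seq node,
    gpath_between a P p s t /\ v \in p /\ w \in p.
Proof.
move=> a5 cs iv iw ct.
have swap : (exists p, gpath_between a P p s t /\ w \in p /\ v \in p) ->
    exists p, gpath_between a P p s t /\ v \in p /\ w \in p.
  by case=> p [g [h1 h2]]; exists p.
case: (ltngtP (ni v) (ni w)) => h.
- by apply: diff_col.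
- by apply: swap; apply: diff_col.
- case hh: ((ntag v == 1) && (ntag w == 1) && (nj v != nj w)).
  + move/andP: hh => [/andP[/eqP t1 /eqP t2] ne].
    case: (ltngtP (nj v) (nj w)) => hj.
    * by apply: special.
    * by apply: swap; apply: special.
    * by rewrite hj eqxx in ne.
  + by apply: same_col_main => //; rewrite hh.
Qed.
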